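(* Let $p\in\mathbb{N}_0$ and for $j\ge2$ let $\overline{\eta}_j=(-1)^j(2^j-2)\psi^{(j-1)}(1)$. Then, regarding $\binom{2m}{m}=\frac{\Gamma(2m+1)}{\Gamma(m+1)^2}$ as an analytic function of $m$ near $0$, $$\frac{d^p}{dm^p}\binom{2m}{m}\bigg|_{m=0}=(-1)^p B_p(0,\overline{\eta}_2,\overline{\eta}_3,\dots,\overline{\eta}_p)$$ and $$\frac{d^p}{dm^p}\bigg(\frac{1}{4^m}\binom{2m}{m}\bigg)\bigg|_{m=0}=(-1)^p\sum_{i=0}^{p}\binom{p}{i}(\log 4)^{p-i}B_i(0,\overline{\eta}_2,\dots,\overline{\eta}_i).$$
   Context: $\psi^{(n)}(z)=\frac{d^{n+1}}{dz^{n+1}}\log\Gamma(z)$ is the polygamma function. $B_n(s_1,\dots,s_n)$ denotes the complete Bell polynomial, defined by $\exp\big(\sum_{j\ge1}s_j t^j/j!\big)=\sum_{n\ge0}B_n(s_1,\dots,s_n)t^n/n!$; $B_0=1$. *)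

(* Defs.v *)
From Stdlib Require Import Reals.
From Coquelicot Require Import Coquelicot.
Open Scope R_scope.

Definition Gamma (x : R) : R :=
  RInt_gen (fun t => Rpower t (x - 1) * exp (- t)) (at_right 0) (Rbar_locally p_infty).

Definition polygamma (n : nat) (z : R) : R :=
  Derive_n (fun y => ln (Gamma y)) (S n) z.

(* Complete Bell polynomial B_n(s_1,...,s_n): n! [t^n] exp(sum_j s_j t^j / j!),
   i.e. the n-th derivative at t = 0 of exp(sum_{j=1}^n s_j t^j / j!)
   (terms with j > n do not affect this coefficient). s 0 is unused. *)
Definition Bell (n : nat) (s : nat -> R) : R :=
  Derive_n (fun t => exp (sum_n_m (fun j => s j * t ^ j / INR (Factorial.fact j)) 1 n)) n 0.

Definition etabar (j : nat) : R :=
  (-1) ^ j * (2 ^ j - 2) * polygamma (j - 1) 1.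

(* argument sequence (0, etabar_2, etabar_3, ...) indexed from 1 *)
Definition bell_args (j : nat) : R := if (j <=? 1)%nat then 0 else etabar j.

Definition central_binom (m : R) : R := Gamma (2 * m + 1) / (Gamma (m + 1)) ^ 2.

(* Main.v *)
Require Import Defs.
From Stdlib Require Import Reals.
From Coquelicot Require Import Coquelicot.
Open Scope R_scope.
From Stdlib Require Import Lra Lia.

Fixpoint bin (n k : nat) : R :=
  match n, k with
  | _, O => 1
  | O, S _ => 0
  | S n', S k' => bin n' k' + bin n' (S k')
  end.

Lemma bin_0 n k : (n < k)%nat -> bin n k = 0.
Proof.
  revert k; induction n; intros k Hk; destruct k; try lia; simpl; auto.
  rewrite !IHn; try lia; ring.
Qed.

Lemma bin_C n k : (k <= n)%nat -> bin n k = Binomial.C n k.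
Proof.
  revert k; induction n; intros k Hk.
  - destruct k; [|lia]. simpl. rewrite C_n_0. auto.
  - destruct k. simpl. rewrite C_n_0; auto.
    simpl. destruct (Nat.eq_dec k n).
    + subst. rewrite (IHn n (le_n n)). rewrite (bin_0 n (S n)) by lia. rewrite !C_n_n. ring.
    + rewrite !IHn; try lia. apply pascal. lia.
Qed.

Lemma bin_n0 n : bin n 0 = 1.
Proof. destruct n; reflexivity. Qed.

Lemma bin_SS n k : bin (S n) (S k) = bin n k + bin n (S k).
Proof. reflexivity. Qed.

Lemma leib_alg (a : nat -> R) k :
  sum_f_R0 (fun i => bin k i * (a (S i) + a i)) k =
  sum_f_R0 (fun i => bin (S k) i * a i) (S k).
Proof.
  rewrite (decomp_sum _ (S k)); [|lia]. simpl pred.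
  replace (sum_f_R0 (fun i => bin k i * (a (S i) + a i)) k) with
    (sum_f_R0 (fun i => bin k i * a (S i)) k + sum_f_R0 (fun i => bin k i * a i) k)
    by (rewrite <- plus_sum; apply sum_eq; intros; ring).
  replace (sum_f_R0 (fun i => bin (S k) (S i) * a (S i)) k) with
    (sum_f_R0 (fun i => bin k i * a (S i)) k + sum_f_R0 (fun i => bin k (S i) * a (S i)) k)
    by (rewrite <- plus_sum; apply sum_eq; intros; rewrite bin_SS; ring).
  assert (H : sum_f_R0 (fun i => bin k i * a i) (S k) =
     bin k 0 * a 0%nat + sum_f_R0 (fun i => bin k (S i) * a (S i)) k).
  { rewrite (decomp_sum _ (S k)); [|lia]. reflexivity. }
  rewrite tech5 in H. rewrite (bin_0 k (S k)) in H by lia.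
  rewrite bin_n0 in H. rewrite bin_n0. lra.
Qed.

Lemma is_derive_sum (f df : nat -> R -> R) n x :
  (forall i, (i <= n)%nat -> is_derive (f i) x (df i x)) ->
  is_derive (fun y => sum_f_R0 (fun i => f i y) n) x (sum_f_R0 (fun i => df i x) n).
Proof.
  induction n; intros H; simpl.
  - apply H; lia.
  - apply (is_derive_plus (fun y => sum_f_R0 (fun i => f i y) n) (f (S n))).
    apply IHn; intros; apply H; lia. apply H; lia.
Qed.

Definition jetn (D : R -> Prop) (F : nat -> R -> R) (n : nat) :=
  forall k x, (k < n)%nat -> D x -> is_derive (F k) x (F (S k) x).

Definition leib (F G : nat -> R -> R) (k : nat) (x : R) :=
  sum_f_R0 (fun i => bin k i * F i x * G (k - i)%nat x) k.

Lemma leib_jetn D F G n : jetn D F n -> jetn D G n -> jetn D (leib F G) n.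
Proof.
  intros HF HG k x Hk Hx. unfold leib.
  set (a := fun i => F i x * G (S k - i)%nat x).
  assert (Hd : is_derive (fun y => sum_f_R0 (fun i => bin k i * F i y * G (k - i)%nat y) k) x
            (sum_f_R0 (fun i => bin k i * (a (S i) + a i)) k)).
  { apply (is_derive_sum (fun i y => bin k i * F i y * G (k - i)%nat y)
           (fun i y => bin k i * (a (S i) + a i))).
      intros i Hi. unfold a.
      replace (S k - S i)%nat with (k - i)%nat by lia. replace (S k - i)%nat with (S (k - i)) by lia.
      eapply is_derive_ext. 2: apply is_derive_scal.
      2: apply (is_derive_mult (F i) (G (k-i)%nat)).
      intros t; unfold mult; simpl; ring.
      apply HF; auto; lia. apply HG; auto; lia. intros; apply Rmult_comm. }
  rewrite leib_alg in Hd.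
  replace (sum_f_R0 (fun i => bin (S k) i * F i x * G (S k - i)%nat x) (S k))
    with (sum_f_R0 (fun i => bin (S k) i * a i) (S k)).
  exact Hd.
  apply sum_eq; intros; unfold a; ring.
Qed.

Lemma jetn_Derive_n D F n f : open D -> jetn D F n -> (forall x, D x -> f x = F 0%nat x) ->
  forall k x, (k <= n)%nat -> D x -> Derive_n f k x = F k x.
Proof.
  intros HD HF Hf. induction k; intros x Hk Hx.
  - simpl; auto.
  - simpl. rewrite (Derive_ext_loc _ (F k)).
    + apply is_derive_unique, HF; auto.
    + apply (locally_open D); auto. intros y Hy; apply IHk; auto; lia.
Qed.

Lemma jetn_ex_derive D F n f : open D -> jetn D F n -> (forall x, D x -> f x = F 0%nat x) ->
  forall k x, (k < n)%nat -> D x -> ex_derive (Derive_n f k) x.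
Proof.
  intros HD HF Hf k x Hk Hx.
  apply (ex_derive_ext_loc (F k)).
  - apply (locally_open D); auto. intros y Hy. symmetry. apply (jetn_Derive_n D F n); auto; lia.
  - eexists; apply HF; auto.
Qed.

Definition okn (D : R -> Prop) f n := forall k x, (k <= n)%nat -> D x -> ex_derive (Derive_n f k) x.
Definition smooth (D : R -> Prop) f := forall k x, D x -> ex_derive (Derive_n f k) x.

Lemma okn_jetn D f n : okn D f n -> jetn D (Derive_n f) (S n).
Proof.
  intros H k x Hk Hx. apply Derive_correct. apply H; auto; lia.
Qed.

Lemma jetn_okn D F n f : open D -> jetn D F (S n) -> (forall x, D x -> f x = F 0%nat x) -> okn D f n.
Proof.
  intros HD HF Hf k x Hk Hx. apply (jetn_ex_derive D F (S n)); auto; lia.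
Qed.

Lemma smooth_okn D f n : smooth D f -> okn D f n.
Proof. intros H k x _ Hx; auto. Qed.

Lemma okn_smooth D f : (forall n, okn D f n) -> smooth D f.
Proof. intros H k x Hx; apply (H k); auto. Qed.

Lemma Derive_n_ext_D D f g : open D -> (forall x, D x -> f x = g x) ->
  forall k x, D x -> Derive_n f k x = Derive_n g k x.
Proof.
  intros HD H k x Hx. apply Derive_n_ext_loc. apply (locally_open D); auto.
Qed.

Lemma okn_ext D f g n : open D -> (forall x, D x -> f x = g x) -> okn D g n -> okn D f n.
Proof.
  intros HD H Hg k x Hk Hx. apply (ex_derive_ext_loc (Derive_n g k)).
  apply (locally_open D); auto. intros y Hy. symmetry; apply (Derive_n_ext_D D); auto.
  apply Hg; auto.
Qed.

Lemma leib_0 F G x : leib F G 0 x = F 0%nat x * G 0%nat x.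
Proof. unfold leib; simpl. ring. Qed.

Lemma okn_mult D f g n : open D -> okn D f n -> okn D g n -> okn D (fun y => f y * g y) n.
Proof.
  intros HD Hf Hg.
  apply (jetn_okn D (leib (Derive_n f) (Derive_n g))); auto.
  apply leib_jetn; apply okn_jetn; auto.
  intros x Hx; rewrite leib_0; reflexivity.
Qed.

Lemma Derive_n_mult_D D f g k x : open D -> smooth D f -> smooth D g -> D x ->
  Derive_n (fun y => f y * g y) k x = leib (Derive_n f) (Derive_n g) k x.
Proof.
  intros HD Hf Hg Hx.
  apply (jetn_Derive_n D _ (S k)); auto.
  apply leib_jetn; apply (okn_jetn D _ k); auto using smooth_okn.
  intros y Hy; rewrite leib_0; reflexivity.
Qed.

Lemma Derive_n_S_Derive f n x : Derive_n f (S n) x = Derive_n (Derive f) n x.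
Proof.
  rewrite <- Nat.add_1_r. rewrite <- (Derive_n_comp f n 1). reflexivity.
Qed.

Lemma okn_Derive D f n : okn D f (S n) -> okn D (Derive f) n.
Proof.
  intros H k x Hk Hx. apply (ex_derive_ext (Derive_n f (S k))).
  intros; apply Derive_n_S_Derive. apply H; auto; lia.
Qed.

Lemma smooth_Derive D f : smooth D f -> smooth D (Derive f).
Proof. intros H. apply okn_smooth; intros n. apply okn_Derive, smooth_okn, H. Qed.

Lemma okn_const D c n : okn D (fun _ => c) n.
Proof.
  intros k x _ _. destruct k.
  - simpl. apply ex_derive_const.
  - apply (ex_derive_ext (fun _ => 0)). intros; rewrite Derive_n_const; auto.
    apply ex_derive_const.
Qed.

Lemma boot D u : open D -> (forall x, D x -> ex_derive u x) ->
  (forall n, okn D u n -> okn D (Derive u) n) -> smooth D u.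
Proof.
  intros HD H0 Hs.
  assert (forall n, okn D u n).
  { induction n; intros k x Hk Hx.
    - replace k with 0%nat by lia. simpl; auto.
    - destruct (Nat.eq_dec k (S n)).
      + subst. apply (ex_derive_ext (Derive_n (Derive u) n)).
        intros; symmetry; apply Derive_n_S_Derive.
        apply (Hs n IHn); auto.
      + apply IHn; auto; lia. }
  apply okn_smooth; auto.
Qed.

Lemma smooth_exp D g : open D -> smooth D g -> smooth D (fun x => exp (g x)).
Proof.
  intros HD Hg. apply boot; auto.
  - intros x Hx. eexists. apply (is_derive_comp exp g). apply is_derive_exp.
    apply Derive_correct. apply (Hg 0%nat); auto.
  - intros n Hn. apply (okn_ext D _ (fun y => Derive g y * exp (g y))); auto.
    + intros x Hx. apply is_derive_unique.
      eapply is_derive_ext. 2: { apply (is_derive_comp exp g). apply is_derive_exp.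
      apply Derive_correct. apply (Hg 0%nat); auto. }
      reflexivity.
    + apply okn_mult; auto. apply smooth_okn, smooth_Derive, Hg.
Qed.

Lemma is_derive_eq (f : R -> R) x l l' : is_derive f x l -> l = l' -> is_derive f x l'.
Proof. intros H E; subst; auto. Qed.

Lemma smooth_inv D h : open D -> smooth D h -> (forall x, D x -> h x <> 0) ->
  smooth D (fun x => / h x).
Proof.
  intros HD Hh Hn. apply boot; auto.
  - intros x Hx. eexists. apply is_derive_inv; auto.
    apply Derive_correct. apply (Hh 0%nat); auto.
  - intros n Hn'. apply (okn_ext D _ (fun y => ((-1) * Derive h y * / h y) * / h y)); auto.
    + intros x Hx. apply is_derive_unique.
      eapply is_derive_eq. apply is_derive_inv; auto.
      apply Derive_correct. apply (Hh 0%nat); auto.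
      simpl. field. auto.
    + apply okn_mult; auto. apply okn_mult; auto. apply okn_mult; auto.
      apply okn_const. apply smooth_okn, smooth_Derive, Hh.
Qed.

Lemma smooth_ln D h : open D -> smooth D h -> (forall x, D x -> 0 < h x) ->
  smooth D (fun x => ln (h x)).
Proof.
  intros HD Hh Hp. apply boot; auto.
  - intros x Hx. eexists. apply (is_derive_comp ln h). apply is_derive_ln; auto.
    apply Derive_correct. apply (Hh 0%nat); auto.
  - intros n Hn'. apply (okn_ext D _ (fun y => Derive h y * / h y)); auto.
    + intros x Hx. apply is_derive_unique.
      eapply is_derive_eq. apply (is_derive_comp ln h). apply is_derive_ln; auto.
      apply Derive_correct. apply (Hh 0%nat); auto.
      simpl. unfold scal; simpl; unfold mult; simpl. ring.
    + apply okn_mult; auto. apply smooth_okn, smooth_Derive, Hh.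
      apply smooth_okn, smooth_inv; auto. intros x Hx; specialize (Hp x Hx); lra.
Qed.

Definition jet (D : R -> Prop) (F : nat -> R -> R) :=
  forall k x, D x -> is_derive (F k) x (F (S k) x).

Lemma jet_Derive_n D F f : open D -> jet D F -> (forall x, D x -> f x = F 0%nat x) ->
  forall k x, D x -> Derive_n f k x = F k x.
Proof.
  intros HD HF Hf k x Hx. apply (jetn_Derive_n D F k); auto.
  intros j y Hj Hy; apply HF; auto.
Qed.

Lemma jet_smooth D F f : open D -> jet D F -> (forall x, D x -> f x = F 0%nat x) -> smooth D f.
Proof.
  intros HD HF Hf k x Hx. apply (jetn_ex_derive D F (S k)); auto.
  intros j y Hj Hy; apply HF; auto.
Qed.

Lemma smooth_jet D f : smooth D f -> jet D (Derive_n f).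
Proof. intros H k x Hx. apply Derive_correct, H; auto. Qed.

Lemma jet_plus D F G : jet D F -> jet D G -> jet D (fun k x => F k x + G k x).
Proof. intros HF HG k x Hx. apply (is_derive_plus (F k) (G k)); auto. Qed.

Lemma jet_scal D F c : jet D F -> jet D (fun k x => c * F k x).
Proof. intros HF k x Hx. apply is_derive_scal; auto. Qed.

Lemma jet_affine D D' F a b : jet D F -> (forall x, D' x -> D (a * x + b)) ->
  jet D' (fun k x => a ^ k * F k (a * x + b)).
Proof.
  intros HF HD k x Hx.
  assert (Ha : is_derive (fun y => a * y + b) x a) by (auto_derive; auto; ring).
  eapply is_derive_eq. apply is_derive_scal.
  apply (is_derive_comp (F k) (fun y => a * y + b)). apply HF; auto. exact Ha.
  simpl. unfold scal, plus; simpl; unfold mult, zero; simpl. ring.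
Qed.

Definition poly (c : nat -> R) (p : nat) (t : R) :=
  sum_n_m (fun j => c j * t ^ j / INR (Factorial.fact j)) 1 p.

Lemma poly_smooth D c p : smooth D (poly c p).
Proof.
  intros k x _.
  apply (ex_derive_n_sum_n_m 1 p (fun j y => c j * y ^ j / INR (Factorial.fact j)) (S k) x).
  apply filter_forall. intros t l j _ _.
  apply (ex_derive_n_ext (fun y => (c l / INR (Factorial.fact l)) * y ^ l)).
  intros; field; apply INR_fact_neq_0.
  apply ex_derive_n_scal_l, ex_derive_n_pow.
Qed.

Lemma term_val c i j : Derive_n (fun y => c * y ^ j / INR (Factorial.fact j)) i 0 =
  if Nat.eq_dec i j then c else 0.
Proof.
  rewrite (Derive_n_ext _ (fun y => (c / INR (Factorial.fact j)) * y ^ j)).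
  2: intros; field; apply INR_fact_neq_0.
  rewrite Derive_n_scal_l, Derive_n_pow.
  destruct (Compare_dec.le_dec i j); destruct (Nat.eq_dec i j).
  - subst. rewrite Nat.sub_diag. simpl. field. apply INR_fact_neq_0.
  - rewrite pow_i by lia. ring.
  - lia.
  - ring.
Qed.

Lemma sum_delta (c : R) i p :
  sum_n_m (fun j => if Nat.eq_dec i j then c else 0) 1 p =
  if Compare_dec.le_dec 1 i then (if Compare_dec.le_dec i p then c else 0) else 0.
Proof.
  induction p.
  - rewrite sum_n_m_zero by lia. destruct (Compare_dec.le_dec 1 i); destruct (Compare_dec.le_dec i 0); try lia; reflexivity.
  - rewrite sum_n_Sm by lia. rewrite IHp.
    destruct (Nat.eq_dec i (S p)).
    + subst. destruct (Compare_dec.le_dec 1 (S p)); [|lia].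
      destruct (Compare_dec.le_dec (S p) p); [lia|].
      destruct (Compare_dec.le_dec (S p) (S p)); [|lia]. unfold plus; simpl; ring.
    + destruct (Compare_dec.le_dec 1 i); destruct (Compare_dec.le_dec i p);
      destruct (Compare_dec.le_dec i (S p)); try lia; unfold plus; simpl; ring.
Qed.

Lemma poly_Derive c p i : (i <= p)%nat ->
  Derive_n (poly c p) i 0 = if Nat.eq_dec i 0 then 0 else c i.
Proof.
  intros Hi. unfold poly.
  rewrite (Derive_n_sum_n_m 1 p (fun j y => c j * y ^ j / INR (Factorial.fact j))).
  2:{ apply filter_forall. intros t l j _ _.
  apply (ex_derive_n_ext (fun y => (c l / INR (Factorial.fact l)) * y ^ l)).
  intros; field; apply INR_fact_neq_0.
  apply ex_derive_n_scal_l, ex_derive_n_pow. }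
  rewrite (sum_n_m_ext _ (fun j => if Nat.eq_dec i j then c i else 0)).
  2:{ intros j. rewrite term_val. destruct (Nat.eq_dec i j); subst; auto. }
  rewrite sum_delta.
  destruct (Nat.eq_dec i 0); destruct (Compare_dec.le_dec 1 i); destruct (Compare_dec.le_dec i p); try lia; auto.
Qed.

Lemma sum_last_only (f : nat -> R) p : (forall i, (i < p)%nat -> f i = 0) ->
  sum_f_R0 f p = f p.
Proof.
  intros H. destruct p. reflexivity.
  rewrite tech5. rewrite (sum_eq _ (fun _ => 0)). rewrite sum_cte. ring.
  intros; apply H; lia.
Qed.

Lemma bin_nn n : bin n n = 1.
Proof. induction n; simpl; auto. rewrite IHn, bin_0 by lia. ring. Qed.

Lemma exp_taylor D h p : open D -> D 0 -> smooth D h -> h 0 = 0 ->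
  Derive_n (fun t => exp (h t)) p 0 =
  Derive_n (fun t => exp (poly (fun j => Derive_n h j 0) p t)) p 0.
Proof.
  intros HD H0 Hh Hh0.
  set (c := fun j => Derive_n h j 0).
  set (T := poly c p).
  set (r := fun t => h t - T t).
  assert (HT : smooth D T) by apply poly_smooth.
  assert (Hrj : jet D (fun k x => Derive_n h k x + (-1) * Derive_n T k x)).
  { apply jet_plus. apply smooth_jet; auto. apply jet_scal, smooth_jet; auto. }
  assert (Hr : smooth D r).
  { apply (jet_smooth D _ r HD Hrj). intros; simpl; unfold r; ring. }
  assert (Hr0 : forall i, (i <= p)%nat -> Derive_n r i 0 = 0).
  { intros i Hi. rewrite (jet_Derive_n D _ r HD Hrj); auto.
    2: intros; simpl; unfold r; ring.
    unfold T. rewrite poly_Derive; auto.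
    destruct (Nat.eq_dec i 0). subst. simpl. rewrite Hh0. ring.
    unfold c. ring. }
  set (u := fun t => exp (r t)).
  assert (Hu : smooth D u) by (apply smooth_exp; auto).
  assert (HeT : smooth D (fun t => exp (T t))) by (apply smooth_exp; auto).
  assert (Hu0 : forall k, (k <= p)%nat -> Derive_n u k 0 = if Nat.eq_dec k 0 then 1 else 0).
  { intros k Hk. destruct k.
    - change (exp (Derive_n r 0 0) = 1). rewrite (Hr0 0%nat) by lia. apply exp_0.
    - rewrite Derive_n_S_Derive.
      rewrite (Derive_n_ext_D D _ (fun y => Derive r y * u y)); auto.
      2:{ intros x Hx. apply is_derive_unique.
          eapply is_derive_eq. apply (is_derive_comp exp r). apply is_derive_exp.
          apply Derive_correct. apply (Hr 0%nat); auto.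
          unfold scal; simpl; unfold mult; simpl. reflexivity. }
      rewrite (Derive_n_mult_D D); auto. 2: apply smooth_Derive; auto.
      unfold leib. rewrite (sum_eq _ (fun _ => 0)). rewrite sum_cte. simpl. ring.
      intros i Hi. rewrite <- Derive_n_S_Derive. rewrite Hr0 by lia. ring. }
  rewrite (Derive_n_ext_D D _ (fun t => exp (T t) * u t)); auto.
  2:{ intros x Hx. unfold u, r. rewrite <- exp_plus. f_equal. ring. }
  rewrite (Derive_n_mult_D D); auto. unfold leib.
  rewrite sum_last_only.
  - rewrite Nat.sub_diag, Hu0 by lia. rewrite bin_nn. simpl. ring.
  - intros i Hi. rewrite Hu0 by lia. destruct (Nat.eq_dec (p - i) 0); [lia|]. ring.
Qed.

Lemma ballR (x e y : R) : ball x e y <-> Rabs (y - x) < e.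
Proof. split; intros H; exact H. Qed.

Lemma cont_of_derive (f : R -> R) x : ex_derive f x -> continuous f x.
Proof. intros H. apply (ex_derive_continuous (K:=R_AbsRing) (V:=R_NormedModule)); auto. Qed.


Lemma ex_gen_left (Fa : (R -> Prop) -> Prop) {FF : ProperFilter Fa} (f P : R -> R) (b L : R) (Q : R -> Prop) :
  Fa Q ->
  (forall a, Q a -> ex_RInt f a b) ->
  (forall a a', Q a -> Q a' -> Rabs (RInt f a a') <= Rabs (P a - P a')) ->
  filterlim P Fa (locally L) ->
  ex_RInt_gen f Fa (at_point b).
Proof.
  intros HQ Hex Hb HP.
  set (Fm := filtermap (fun a => RInt f a b) Fa).
  assert (PF : ProperFilter Fm) by (apply filtermap_proper_filter; auto).
  assert (Hc : cauchy Fm).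
  { apply cauchy_distance; auto. intros eps.
    assert (He2 : 0 < eps / 2) by (destruct eps; simpl; lra).
    pose proof (proj1 (filterlim_locally P L) HP (mkposreal _ He2)) as HL.
    exists (fun z => exists a, Q a /\ ball L (eps/2) (P a) /\ z = RInt f a b).
    split.
    - unfold Fm, filtermap. apply filter_imp with (fun a => Q a /\ ball L (eps / 2) (P a)).
      intros a [H1 H2]. exists a; auto. apply filter_and; auto.
    - intros u v [a [Qa [Ba ->]]] [a' [Qa' [Ba' ->]]].
      apply ballR. apply ballR in Ba. apply ballR in Ba'. simpl in *.
      assert (Ea : ex_RInt f a' a).
      { apply ex_RInt_Chasles with b. apply Hex; auto. apply ex_RInt_swap, Hex; auto. }
      rewrite <- (RInt_Chasles f a' a b); auto.
      change (plus (RInt f a' a) (RInt f a b)) with (RInt f a' a + RInt f a b).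
      assert (E : forall x y : R, x + y - y = x) by (intros; ring). rewrite E.
      eapply Rle_lt_trans. apply Hb; auto.
      replace (P a' - P a) with ((P a' - L) - (P a - L)) by ring.
      eapply Rle_lt_trans. apply Rabs_triang. rewrite Rabs_Ropp.
      pose proof (proj1 (ballR _ _ _) Ba). pose proof (proj1 (ballR _ _ _) Ba').  lra. }
  exists (lim Fm).
  intros P' [eps Heps].
  pose proof (complete_cauchy Fm PF Hc eps) as HB.
  apply (Filter_prod _ _ _ (fun a => Q a /\ ball (lim Fm) eps (RInt f a b)) (fun y => y = b)).
  - apply filter_and; auto.
  - reflexivity.
  - intros a y [Qa Ba] ->. exists (RInt f a b). split.
    exact (RInt_correct f a b (Hex a Qa)). apply Heps; exact Ba.
Qed.

Lemma RInt_bound (f d P : R -> R) u v :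
  (forall t, Rmin u v <= t <= Rmax u v ->
     continuous f t /\ continuous d t /\ Rabs (f t) <= d t /\ is_derive P t (d t)) ->
  Rabs (RInt f u v) <= Rabs (P u - P v).
Proof.
  assert (main : forall u v, u <= v -> (forall t, u <= t <= v ->
     continuous f t /\ continuous d t /\ Rabs (f t) <= d t /\ is_derive P t (d t)) ->
    Rabs (RInt f u v) <= Rabs (P u - P v)).
  { clear u v. intros u v Huv H.
    assert (Ef : ex_RInt f u v).
    { apply (ex_RInt_continuous (V:=R_CompleteNormedModule)). rewrite Rmin_left, Rmax_right by lra. intros; apply H; auto. }
    assert (Ed : ex_RInt d u v).
    { apply (ex_RInt_continuous (V:=R_CompleteNormedModule)). rewrite Rmin_left, Rmax_right by lra. intros; apply H; auto. }
    eapply Rle_trans. apply abs_RInt_le; auto.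
    eapply Rle_trans. apply RInt_le. lra. apply (ex_RInt_norm f); auto. exact Ed.
    intros t Ht. apply (H t). lra.
    rewrite (is_RInt_unique d u v (minus (P v) (P u))).
    change (minus (P v) (P u)) with (P v - P u).
    rewrite Rabs_minus_sym. apply Rle_abs.
    apply (is_RInt_derive (V:=R_CompleteNormedModule)). rewrite Rmin_left, Rmax_right by lra. intros; apply H; auto.
    rewrite Rmin_left, Rmax_right by lra. intros; apply H; auto. }
  intros H. destruct (Rle_dec u v).
  - apply main; auto. rewrite Rmin_left, Rmax_right in H by lra. auto.
  - rewrite <- opp_RInt_swap.
    change (opp (RInt f v u)) with (- RInt f v u). rewrite Rabs_Ropp, Rabs_minus_sym.
    apply main. lra. rewrite Rmin_right, Rmax_left in H by lra. auto.
    apply (ex_RInt_continuous (V:=R_CompleteNormedModule)). intros; apply H; rewrite Rmin_comm, Rmax_comm; auto.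
Qed.

Lemma lim_scal0 {T} (F : (T -> Prop) -> Prop) {FF : Filter F} (g : T -> R) K :
  filterlim g F (locally 0) -> filterlim (fun t => K * g t) F (locally 0).
Proof.
  intros H. eapply filterlim_comp. exact H.
  pose proof (filterlim_Rbar_mult_l K (Finite 0)) as H2. simpl in H2.
  rewrite Rmult_0_r in H2. exact H2.
Qed.

Lemma lim_exp_m : filterlim exp (Rbar_locally m_infty) (locally 0).
Proof. exact is_lim_exp_m. Qed.

Lemma lim_left_pow beta : 0 < beta ->
  filterlim (fun t => exp (beta * ln t)) (at_right 0) (locally 0).
Proof.
  intros Hb. eapply filterlim_comp. 2: apply lim_exp_m.
  eapply filterlim_comp. apply is_lim_ln_0.
  intros P [M HM]. exists (M / beta). intros x Hx. apply HM.
  apply Rmult_lt_reg_l with (/ beta). apply Rinv_0_lt_compat; auto.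
  rewrite <- Rmult_assoc, Rinv_l, Rmult_1_l by lra. unfold Rdiv in Hx. lra.
Qed.

Lemma lim_right_exp :
  filterlim (fun t => exp (- t / 2)) (Rbar_locally p_infty) (locally 0).
Proof.
  eapply filterlim_comp. 2: apply lim_exp_m.
  intros P [M HM]. exists (- 2 * M). intros x Hx. apply HM. lra.
Qed.

Lemma at_right_01 : at_right 0 (fun a => 0 < a <= 1).
Proof.
  exists (mkposreal 1 Rlt_0_1). intros y Hy Hp. change (Rabs (y - 0) < 1) in Hy.
  split; auto. apply Rabs_def2 in Hy. lra.
Qed.

Lemma ex_Gamma_type f M beta : 0 < beta ->
  (forall t, 0 < t -> continuous f t) ->
  (forall t, 0 < t <= 1 -> Rabs (f t) <= M * exp ((beta - 1) * ln t)) ->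
  (forall t, 1 <= t -> Rabs (f t) <= M * exp (- t / 2)) ->
  ex_RInt_gen f (at_right 0) (Rbar_locally p_infty).
Proof.
  intros Hb Hc HL HR.
  assert (Hex : forall a b, 0 < a -> 0 < b -> ex_RInt f a b).
  { intros a b Ha Hb'. apply (ex_RInt_continuous (V:=R_CompleteNormedModule)).
    intros z Hz. apply Hc. assert (0 < Rmin a b) by (apply Rmin_glb_lt; auto). lra. }
  apply (ex_RInt_gen_Chasles (Fa := at_right 0) (Fc := Rbar_locally p_infty)) with 1.
  - apply (ex_gen_left (at_right 0) f (fun t => (M / beta) * exp (beta * ln t)) 1 0
             (fun a => 0 < a <= 1)).
    + apply at_right_01.
    + intros a Ha. apply Hex; lra.
    + intros a a' Ha Ha'. apply (RInt_bound f (fun t => M * exp ((beta - 1) * ln t)) (fun t => (M / beta) * exp (beta * ln t))).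
      intros t Ht.
      assert (Ht0 : 0 < t /\ t <= 1).
      { split. assert (0 < Rmin a a') by (apply Rmin_glb_lt; lra). lra.
        assert (Rmax a a' <= 1) by (apply Rmax_lub; lra). lra. }
      split; [apply Hc; lra|]. split.
      * apply cont_of_derive. auto_derive. lra.
      * split. apply HL; lra.
        eapply is_derive_eq. auto_derive. lra. reflexivity.
        replace ((beta - 1) * ln t) with (beta * ln t + - ln t) by ring.
        rewrite exp_plus, exp_Ropp, exp_ln by lra. match goal with |- ?x = ?y => change (@eq R x y) end. field; lra.
    + apply (lim_scal0 (at_right 0)). apply lim_left_pow; auto.
  - destruct (ex_gen_left (Rbar_locally p_infty) f (fun t => (-2 * M) * exp (- t / 2)) 1 0
             (fun a => 1 <= a)) as [l Hl].
    + exists 1. intros; lra.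
    + intros a Ha. apply Hex; lra.
    + intros a a' Ha Ha'. apply (RInt_bound f (fun t => M * exp (- t / 2)) (fun t => (-2 * M) * exp (- t / 2))).
      intros t Ht.
      assert (Ht0 : 1 <= t).
      { assert (1 <= Rmin a a') by (apply Rmin_glb; lra). lra. }
      split; [apply Hc; lra|]. split.
      * apply cont_of_derive. auto_derive. auto.
      * split. apply HR; lra.
        eapply is_derive_eq. auto_derive. auto. reflexivity. match goal with |- ?x = ?y => change (@eq R x y) end. unfold Rdiv. field.
    + apply (lim_scal0 (Rbar_locally p_infty)). apply lim_right_exp.
    + exists (opp l). apply is_RInt_gen_swap; auto.
Qed.

Ltac req := match goal with |- ?x = ?y => change (@eq R x y) end.

Lemma exp_le x y : x <= y -> exp x <= exp y.
Proof. intros [H|H]. left; apply exp_increasing; auto. subst; lra. Qed.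

Lemma pow_fact_exp z k : 0 <= z -> z ^ k <= INR (Factorial.fact k) * exp z.
Proof.
  intros Hz. pose proof (exp_ge_taylor z k Hz) as H.
  assert (Hf : 0 < INR (Factorial.fact k)) by (apply INR_fact_lt_0).
  assert (z ^ k / INR (Factorial.fact k) <= exp z).
  { eapply Rle_trans. 2: exact H. destruct k.
    - simpl. lra.
    - rewrite tech5. assert (0 <= sum_f_R0 (fun k0 : nat => z ^ k0 / INR (Factorial.fact k0)) k).
      apply cond_pos_sum. intros n. apply Rmult_le_pos. apply pow_le; auto.
      left; apply Rinv_0_lt_compat, INR_fact_lt_0. lra. }
  apply Rmult_le_reg_r with (/ INR (Factorial.fact k)). apply Rinv_0_lt_compat; auto.
  replace (INR (Factorial.fact k) * exp z * / INR (Factorial.fact k)) with (exp z) by (field; lra).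
  exact H0.
Qed.

Definition g (k : nat) (x t : R) := (ln t) ^ k * exp ((x - 1) * ln t) * exp (- t).

Definition M1 k := 8 ^ k * INR (Factorial.fact k).
Definition M2 k := 2 ^ (S k) * INR (Factorial.fact (S k)).

Lemma g_bound_left k x t : 1/4 <= x <= 7/4 -> 0 < t <= 1 ->
  Rabs (g k x t) <= M1 k * exp ((1/8 - 1) * ln t).
Proof.
  intros Hx Ht. unfold g. set (l := ln t).
  assert (Hl : l <= 0). { unfold l. rewrite <- ln_1. apply ln_le; lra. }
  rewrite !Rabs_mult. rewrite <- RPow_abs. rewrite Rabs_left1 with (a := l) by lra.
  rewrite !Rabs_right by (left; apply exp_pos).
  assert (H1 : exp (- t) <= 1) by (rewrite <- exp_0; apply exp_le; lra).
  assert (H2 : exp ((x - 1) * l) <= exp ((1/4 - 1) * l)) by (apply exp_le; nra).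
  assert (H3 : (- l) ^ k <= M1 k * exp (- l / 8)).
  { unfold M1. replace (- l) with (8 * (- l / 8)) at 1 by field.
    rewrite Rpow_mult_distr. rewrite Rmult_assoc. apply Rmult_le_compat_l.
    apply pow_le; lra. apply pow_fact_exp. lra. }
  replace ((1/8 - 1) * l) with (- l / 8 + (1/4 - 1) * l) by field.
  rewrite exp_plus.
  assert (0 <= (- l) ^ k) by (apply pow_le; lra).
  assert (0 < exp ((x - 1) * l)) by apply exp_pos.
  assert (0 < exp (- t)) by apply exp_pos.
  assert (0 < exp (- l / 8)) by apply exp_pos.
  assert (0 <= M1 k) by (unfold M1; apply Rmult_le_pos; [apply pow_le; lra| apply pos_INR]).
  apply Rle_trans with ((- l) ^ k * exp ((x - 1) * l) * 1).
  apply Rmult_le_compat_l; auto. apply Rmult_le_pos; lra.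
  rewrite Rmult_1_r.
  apply Rle_trans with (M1 k * exp (- l / 8) * exp ((x - 1) * l)).
  apply Rmult_le_compat_r; lra.
  rewrite Rmult_assoc. apply Rmult_le_compat_l; auto. apply Rmult_le_compat_l; lra.
Qed.

Lemma g_bound_right k x t : 1/4 <= x <= 7/4 -> 1 <= t ->
  Rabs (g k x t) <= M2 k * exp (- t / 2).
Proof.
  intros Hx Ht. unfold g. set (l := ln t).
  assert (Hl : 0 <= l). { unfold l. rewrite <- ln_1. apply ln_le; lra. }
  assert (Hlt : l <= t). { pose proof (exp_ineq1_le l). unfold l at 2 in H. rewrite exp_ln in H; lra. }
  rewrite !Rabs_mult. rewrite <- RPow_abs. rewrite Rabs_right with (r := l) by lra.
  rewrite !Rabs_right by (left; apply exp_pos).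
  assert (H2 : exp ((x - 1) * l) <= t).
  { assert (E : exp l = t) by (unfold l; apply exp_ln; lra).
    rewrite <- E. apply exp_le. nra. }
  assert (H3 : l ^ k <= t ^ k) by (apply pow_incr; lra).
  assert (H4 : t ^ S k <= M2 k * exp (t / 2)).
  { unfold M2. replace t with (2 * (t / 2)) at 1 by field.
    rewrite Rpow_mult_distr. rewrite Rmult_assoc. apply Rmult_le_compat_l.
    apply pow_le; lra. apply pow_fact_exp. lra. }
  assert (0 <= l ^ k) by (apply pow_le; lra).
  assert (0 < exp ((x - 1) * l)) by apply exp_pos.
  assert (0 < exp (- t)) by apply exp_pos.
  apply Rle_trans with (t ^ S k * exp (- t)).
  { simpl. rewrite (Rmult_comm t (t ^ k)). apply Rmult_le_compat_r. lra.
    apply Rmult_le_compat; lra. }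
  replace (exp (- t / 2)) with (exp (t / 2) * exp (- t)).
  2:{ rewrite <- exp_plus. f_equal. field. }
  rewrite <- Rmult_assoc. apply Rmult_le_compat_r; lra.
Qed.

Lemma g_cont k x t : 0 < t -> continuous (g k x) t.
Proof. intros Ht. apply cont_of_derive. unfold g. auto_derive. lra. Qed.

Definition G k x := RInt_gen (g k x) (at_right 0) (Rbar_locally p_infty).

Lemma g_ex k x : 1/4 <= x <= 7/4 -> ex_RInt_gen (g k x) (at_right 0) (Rbar_locally p_infty).
Proof.
  intros Hx. apply (ex_Gamma_type (g k x) (Rmax (M1 k) (M2 k)) (1/8)). lra.
  - intros; apply g_cont; auto.
  - intros t Ht. eapply Rle_trans. apply g_bound_left; auto.
    apply Rmult_le_compat_r. left; apply exp_pos. apply Rmax_l.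
  - intros t Ht. eapply Rle_trans. apply g_bound_right; auto.
    apply Rmult_le_compat_r. left; apply exp_pos. apply Rmax_r.
Qed.

Lemma g_is k x : 1/4 <= x <= 7/4 -> is_RInt_gen (g k x) (at_right 0) (Rbar_locally p_infty) (G k x).
Proof. intros Hx. apply (RInt_gen_correct (V:=R_CompleteNormedModule)). apply g_ex; auto. Qed.

Lemma phi_bound l s : 1/4 <= s <= 7/4 ->
  exp ((s - 1) * l) <= exp ((1/4 - 1) * l) + exp ((7/4 - 1) * l).
Proof.
  intros Hs. pose proof (exp_pos ((1/4 - 1) * l)). pose proof (exp_pos ((7/4 - 1) * l)).
  destruct (Rle_dec 0 l).
  - assert (exp ((s - 1) * l) <= exp ((7/4 - 1) * l)) by (apply exp_le; nra). lra.
  - assert (exp ((s - 1) * l) <= exp ((1/4 - 1) * l)) by (apply exp_le; nra). lra.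
Qed.

Lemma taylor_pt l x y : 1/4 <= x <= 7/4 -> 1/4 <= y <= 7/4 ->
  Rabs (exp ((y - 1) * l) - exp ((x - 1) * l) - (y - x) * (l * exp ((x - 1) * l))) <=
  (y - x) ^ 2 * (l ^ 2 * (exp ((1/4 - 1) * l) + exp ((7/4 - 1) * l))).
Proof.
  intros Hx Hy. set (phi := fun s => exp ((s - 1) * l)).
  assert (dphi : forall s, is_derive phi s (l * phi s)).
  { intros s. unfold phi. eapply is_derive_eq. auto_derive. auto. reflexivity. req; unfold Rminus; ring. }
  assert (cphi : forall s, continuity_pt phi s).
  { intros s. apply continuity_pt_filterlim. apply cont_of_derive. eexists; apply dphi. }
  destruct (MVT_gen phi x y (fun s => l * phi s)) as [c [Hc Ec]].
  { intros; apply dphi. } { intros; apply cphi. }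
  destruct (MVT_gen phi x c (fun s => l * phi s)) as [d [Hd Ed]].
  { intros; apply dphi. } { intros; apply cphi. }
  change (exp ((y - 1) * l)) with (phi y). change (exp ((x - 1) * l)) with (phi x).
  assert (Ey : phi y = phi x + l * phi c * (y - x)) by lra.
  assert (Ec' : phi c = phi x + l * phi d * (c - x)) by lra.
  rewrite Ey, Ec'.
  replace (phi x + l * (phi x + l * phi d * (c - x)) * (y - x) - phi x - (y - x) * (l * phi x))
    with ((y - x) * (c - x) * (l ^ 2 * phi d)) by ring.
  assert (Hcx : Rabs (c - x) <= Rabs (y - x)).
  { unfold Rmin, Rmax in Hc. destruct (Rle_dec x y); unfold Rabs; destruct (Rcase_abs (c - x));
    destruct (Rcase_abs (y - x)); lra. }
  assert (Hdr : 1/4 <= d <= 7/4).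
  { unfold Rmin, Rmax in Hc, Hd. destruct (Rle_dec x y); destruct (Rle_dec x c); lra. }
  pose proof (phi_bound l d Hdr) as Hb. fold (phi d) in Hb.
  assert (0 < phi d) by (unfold phi; apply exp_pos).
  assert (0 <= l ^ 2) by (rewrite <- Rsqr_pow2; apply Rle_0_sqr).
  rewrite !Rabs_mult. rewrite (Rabs_right (l ^ 2)) by lra. rewrite (Rabs_right (phi d)) by lra.
  rewrite <- (pow2_abs (y - x)).
  assert (0 <= Rabs (c - x)) by apply Rabs_pos.
  assert (0 <= Rabs (y - x)) by apply Rabs_pos.
  assert (A1 : Rabs (y - x) * Rabs (c - x) <= Rabs (y - x) ^ 2).
  { simpl. rewrite Rmult_1_r. apply Rmult_le_compat_l; auto. }
  assert (A2 : l ^ 2 * phi d <= l ^ 2 * (exp ((1 / 4 - 1) * l) + exp ((7 / 4 - 1) * l))).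
  { apply Rmult_le_compat_l; auto. }
  apply Rmult_le_compat; auto. apply Rmult_le_pos; auto. apply Rmult_le_pos; lra.
Qed.

Definition Rk k t := g (2 * k + 4) (1/4) t + g (2 * k + 4) (7/4) t + g 0 (1/4) t + g 0 (7/4) t.
Definition Ck k := G (2 * k + 4) (1/4) + G (2 * k + 4) (7/4) + G 0 (1/4) + G 0 (7/4).

Lemma Rk_is k : is_RInt_gen (Rk k) (at_right 0) (Rbar_locally p_infty) (Ck k).
Proof.
  assert (HF : forall m a, 1/4 <= a <= 7/4 ->
      is_RInt_gen (g m a) (at_right 0) (Rbar_locally p_infty) (G m a)) by (intros; apply g_is; auto).
  unfold Rk, Ck.
  apply (is_RInt_gen_plus (V:=R_NormedModule) (Fa := at_right 0) (Fb := Rbar_locally p_infty)).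
  apply (is_RInt_gen_plus (V:=R_NormedModule) (Fa := at_right 0) (Fb := Rbar_locally p_infty)).
  apply (is_RInt_gen_plus (V:=R_NormedModule) (Fa := at_right 0) (Fb := Rbar_locally p_infty)).
  all: apply HF; lra.
Qed.

Lemma pt_bound k x y t : 1/4 <= x <= 7/4 -> 1/4 <= y <= 7/4 ->
  Rabs (g k y t - g k x t - (y - x) * g (S k) x t) <= (y - x) ^ 2 * Rk k t.
Proof.
  intros Hx Hy. set (l := ln t).
  assert (E : g k y t - g k x t - (y - x) * g (S k) x t =
     l ^ k * exp (- t) * (exp ((y - 1) * l) - exp ((x - 1) * l) - (y - x) * (l * exp ((x - 1) * l)))).
  { unfold g. fold l. simpl. ring. }
  set (B := exp ((1/4 - 1) * l) + exp ((7/4 - 1) * l)).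
  assert (ER : Rk k t = (1 + l ^ (2 * k + 4)) * B * exp (- t)).
  { unfold Rk, g, B. fold l. simpl. ring. }
  rewrite E, ER.
  pose proof (taylor_pt l x y Hx Hy) as HT. fold B in HT.
  set (w := Rabs l ^ (k + 2)).
  assert (Hw1 : Rabs l ^ k * l ^ 2 = w).
  { unfold w. rewrite pow_add. f_equal. rewrite <- (pow2_abs l). reflexivity. }
  assert (Hw2 : l ^ (2 * k + 4) = w ^ 2).
  { unfold w. replace (2 * k + 4)%nat with ((k + 2) * 2)%nat by lia.
    rewrite !pow_mult. rewrite <- pow_mult. rewrite <- pow_mult.
    replace ((k + 2) * 2)%nat with (2 * (k + 2))%nat by lia. rewrite !pow_mult.
    rewrite pow2_abs. reflexivity. }
  assert (Hw : w <= 1 + w ^ 2) by nra.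
  assert (HB : 0 <= B) by (unfold B; pose proof (exp_pos ((1/4 - 1) * l)); pose proof (exp_pos ((7/4 - 1) * l)); lra).
  assert (He : 0 < exp (- t)) by apply exp_pos.
  assert (Hlk : 0 <= Rabs l ^ k) by (apply pow_le, Rabs_pos).
  rewrite !Rabs_mult. rewrite <- RPow_abs. rewrite (Rabs_right (exp (- t))) by lra.
  apply Rle_trans with (Rabs l ^ k * exp (- t) * ((y - x) ^ 2 * (l ^ 2 * B))).
  { apply Rmult_le_compat_l; auto. apply Rmult_le_pos; lra. }
  rewrite Hw2.
  assert (0 <= (y - x) ^ 2) by (rewrite <- Rsqr_pow2; apply Rle_0_sqr).
  replace (Rabs l ^ k * exp (- t) * ((y - x) ^ 2 * (l ^ 2 * B))) with
    ((y - x) ^ 2 * (Rabs l ^ k * l ^ 2) * B * exp (- t)) by ring.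
  rewrite Hw1.
  replace ((y - x) ^ 2 * ((1 + w ^ 2) * B * exp (- t))) with ((y - x) ^ 2 * (1 + w ^ 2) * B * exp (- t)) by ring.
  apply Rmult_le_compat_r; [lra|]. apply Rmult_le_compat_r; [lra|].
  apply Rmult_le_compat_l; auto.
Qed.

Lemma G_bound k x y : 1/4 <= x <= 7/4 -> 1/4 <= y <= 7/4 ->
  Rabs (G k y - G k x - (y - x) * G (S k) x) <= (y - x) ^ 2 * Ck k.
Proof.
  intros Hx Hy.
  assert (HI : is_RInt_gen (fun t => minus (minus (g k y t) (g k x t)) (scal (y - x) (g (S k) x t)))
     (at_right 0) (Rbar_locally p_infty) (minus (minus (G k y) (G k x)) (scal (y - x) (G (S k) x)))).
  { apply (is_RInt_gen_minus (V:=R_NormedModule) (Fa := at_right 0) (Fb := Rbar_locally p_infty)).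
    apply (is_RInt_gen_minus (V:=R_NormedModule) (Fa := at_right 0) (Fb := Rbar_locally p_infty)).
    apply g_is; auto. apply g_is; auto.
    apply (is_RInt_gen_scal (V:=R_NormedModule) (Fa := at_right 0) (Fb := Rbar_locally p_infty)).
    apply g_is; auto. }
  assert (HJ : is_RInt_gen (fun t => scal ((y - x) ^ 2) (Rk k t)) (at_right 0) (Rbar_locally p_infty)
     (scal ((y - x) ^ 2) (Ck k))).
  { apply (is_RInt_gen_scal (V:=R_NormedModule) (Fa := at_right 0) (Fb := Rbar_locally p_infty)).
    apply Rk_is. }
  assert (H1 : filter_prod (at_right 0) (Rbar_locally p_infty) (fun ab : R * R => fst ab <= snd ab)).
  { apply (Filter_prod _ _ _ (fun a => 0 < a <= 1) (fun b => 1 < b) at_right_01).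
    exists 1; auto. intros a b Ha Hb; simpl; lra. }
  assert (H2 : filter_prod (at_right 0) (Rbar_locally p_infty) (fun ab : R * R =>
     forall t, fst ab <= t <= snd ab ->
     norm (minus (minus (g k y t) (g k x t)) (scal (y - x) (g (S k) x t))) <= scal ((y - x) ^ 2) (Rk k t))).
  { apply (Filter_prod _ _ _ (fun a => 0 < a <= 1) (fun b => 1 < b) at_right_01).
    exists 1; auto. intros a b Ha Hb t Ht; simpl in Ht.
    apply (pt_bound k x y t); auto. }
  pose proof (RInt_gen_norm (V:=R_CompleteNormedModule) (Fa:=at_right 0) (Fb:=Rbar_locally p_infty)
     _ _ _ _ H1 H2 HI HJ) as HN.
  exact HN.
Qed.

Lemma G_deriv k x : 1/2 < x < 3/2 -> is_derive (G k) x (G (S k) x).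
Proof.
  intros Hx. apply is_derive_Reals. intros eps Heps.
  set (C := Rabs (Ck k)).
  assert (HC : 0 <= C) by apply Rabs_pos.
  assert (Hd : 0 < Rmin (1/4) (eps / (C + 1))).
  { apply Rmin_glb_lt. lra. apply Rdiv_lt_0_compat; lra. }
  exists (mkposreal _ Hd). intros h Hh0 Hh. simpl in Hh.
  assert (Hh1 : Rabs h < 1/4) by (eapply Rlt_le_trans; [exact Hh| apply Rmin_l]).
  assert (Hh2 : Rabs h < eps / (C + 1)) by (eapply Rlt_le_trans; [exact Hh| apply Rmin_r]).
  apply Rabs_def2 in Hh1 as [Ha Hb].
  pose proof (G_bound k x (x + h)) as HB.
  replace (x + h - x) with h in HB by ring.
  assert (HB' : Rabs (G k (x + h) - G k x - h * G (S k) x) <= h ^ 2 * C).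
  { eapply Rle_trans. apply HB; lra. apply Rmult_le_compat_l.
    rewrite <- Rsqr_pow2; apply Rle_0_sqr. apply Rle_abs. }
  replace ((G k (x + h) - G k x) / h - G (S k) x) with ((G k (x + h) - G k x - h * G (S k) x) / h)
    by (field; auto).
  assert (Hap : 0 < Rabs h) by (apply Rabs_pos_lt; auto).
  unfold Rdiv. rewrite Rabs_mult, Rabs_inv.
  apply Rle_lt_trans with (h ^ 2 * C * / Rabs h).
  apply Rmult_le_compat_r. left; apply Rinv_0_lt_compat; auto. auto.
  rewrite <- (pow2_abs h).
  replace (Rabs h ^ 2 * C * / Rabs h) with (Rabs h * C) by (field; lra).
  apply Rle_lt_trans with (Rabs h * (C + 1)). nra.
  apply Rmult_lt_reg_r with (/ (C + 1)). apply Rinv_0_lt_compat; lra.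
  replace (Rabs h * (C + 1) * / (C + 1)) with (Rabs h) by (field; lra). exact Hh2.
Qed.

Lemma Gamma_G x : 1/4 <= x <= 7/4 -> Gamma x = G 0 x.
Proof.
  intros Hx. unfold Gamma, G. symmetry.
  apply (RInt_gen_ext_eq (V:=R_CompleteNormedModule) (Fa := at_right 0) (Fb := Rbar_locally p_infty)).
  intros t. unfold g, Rpower. simpl. ring.
  apply g_ex; auto.
Qed.

Lemma lim_exp_opp : filterlim (fun t => exp (- t)) (Rbar_locally p_infty) (locally 0).
Proof.
  eapply filterlim_comp. 2: apply lim_exp_m.
  intros P [M HM]. exists (- M). intros x Hx. apply HM. lra.
Qed.

Lemma G01 : G 0 1 = 1.
Proof.
  set (f := fun t => - exp (- t)).
  assert (Hd : forall t, Derive f t = exp (- t)).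
  { intros t. apply is_derive_unique. unfold f. eapply is_derive_eq. auto_derive. auto. reflexivity.
    req; ring. }
  assert (H : is_RInt_gen (Derive f) (at_right 0) (Rbar_locally p_infty) (0 - -1)).
  { apply (is_RInt_gen_Derive (Fa := at_right 0) (Fb := Rbar_locally p_infty)).
    - apply (Filter_prod _ _ _ (fun _ => True) (fun _ => True)). apply filter_true. apply filter_true.
      intros; unfold f; auto_derive; auto.
    - apply (Filter_prod _ _ _ (fun _ => True) (fun _ => True)). apply filter_true. apply filter_true.
      intros. apply (continuous_ext (fun t => exp (- t))). intros; symmetry; apply Hd.
      apply cont_of_derive. auto_derive. auto.
    - apply (filterlim_filter_le_1 (F := locally 0)). apply filter_le_within.
      assert (Hc : continuous f 0) by (apply cont_of_derive; unfold f; auto_derive; auto).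
      replace (-1) with (f 0). exact Hc. unfold f. rewrite Ropp_0, exp_0. reflexivity.
    - apply (filterlim_ext (fun t => -1 * exp (- t))). intros; unfold f; ring.
      apply (lim_scal0 (Rbar_locally p_infty)). apply lim_exp_opp. }
  replace (0 - -1) with 1 in H by ring.
  unfold G. apply (is_RInt_gen_unique (V:=R_CompleteNormedModule)).
  apply (is_RInt_gen_ext (V:=R_NormedModule) (Fa := at_right 0) (Fb := Rbar_locally p_infty) (Derive f)).
  apply (Filter_prod _ _ _ (fun _ => True) (fun _ => True)). apply filter_true. apply filter_true.
  intros a b _ _ t _. rewrite Hd. unfold g. simpl. rewrite Rminus_diag, Rmult_0_l, exp_0. ring.
  exact H.
Qed.

Lemma open_abs c r : open (fun x => Rabs (x - c) < r).
Proof.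
  intros x Hx. assert (He : 0 < r - Rabs (x - c)) by lra.
  exists (mkposreal _ He). intros y Hy. change (Rabs (y - x) < r - Rabs (x - c)) in Hy.
  replace (y - c) with ((y - x) + (x - c)) by ring.
  eapply Rle_lt_trans. apply Rabs_triang. lra.
Qed.

Lemma open_True : open (fun _ : R => True).
Proof. intros x _. apply filter_true. Qed.

Lemma neg1_sq n : (-1) ^ n * (-1) ^ n = 1.
Proof. rewrite <- Rpow_mult_distr. replace (-1 * -1) with 1 by ring. apply pow1. Qed.

Lemma Gamma_pos_region : exists d, 0 < d /\ d <= 1/2 /\
  forall x, Rabs (x - 1) < d -> 0 < Gamma x.
Proof.
  assert (Hc : continuous (G 0) 1).
  { apply cont_of_derive. eexists. apply G_deriv. lra. }
  pose proof (proj1 (filterlim_locally (G 0) (G 0 1)) Hc (mkposreal (1/2) ltac:(lra))) as H.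
  destruct H as [eps Heps].
  exists (Rmin eps (1/2)). split. apply Rmin_glb_lt. apply cond_pos. lra. split. apply Rmin_r.
  intros x Hx.
  assert (Hx1 : Rabs (x - 1) < eps) by (eapply Rlt_le_trans; [exact Hx| apply Rmin_l]).
  assert (Hx2 : Rabs (x - 1) < 1/2) by (eapply Rlt_le_trans; [exact Hx| apply Rmin_r]).
  specialize (Heps x Hx1). change (Rabs (G 0 x - G 0 1) < 1/2) in Heps.
  rewrite G01 in Heps. apply Rabs_def2 in Heps. apply Rabs_def2 in Hx2.
  rewrite Gamma_G by lra. lra.
Qed.

Theorem mainTheorem6 (p : nat) :
  Derive_n central_binom p 0 = (-1) ^ p * Bell p bell_args /\
  Derive_n (fun m => central_binom m / Rpower 4 m) p 0 =
    (-1) ^ p * sum_n_m (fun i => Binomial.C p i * (ln 4) ^ (p - i) * Bell i bell_args) 0 p.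
Proof.
  destruct Gamma_pos_region as [d [Hd0 [Hd1 Hpos]]].
  set (DG := fun x => Rabs (x - 1) < d).
  assert (HDG : open DG) by apply open_abs.
  assert (HGj : jet DG G).
  { intros k x Hx. apply G_deriv. unfold DG in Hx. apply Rabs_def2 in Hx. lra. }
  assert (HGam : smooth DG Gamma).
  { apply (jet_smooth DG G); auto. intros x Hx. unfold DG in Hx. apply Rabs_def2 in Hx.
    apply Gamma_G. lra. }
  set (L := fun y => ln (Gamma y)).
  assert (HL : smooth DG L) by (apply smooth_ln; auto).
  set (DL := Derive_n L).
  set (Dm := fun m => Rabs (m - 0) < d / 2).
  assert (HDm : open Dm) by apply open_abs.
  assert (HDm0 : Dm 0) by (unfold Dm; rewrite Rminus_0_r, Rabs_R0; lra).
  assert (Hm2 : forall m, Dm m -> DG (2 * m + 1)).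
  { intros m Hm. unfold Dm, DG in *. replace (2 * m + 1 - 1) with (2 * (m - 0)) by ring.
    rewrite Rabs_mult, Rabs_right by lra. lra. }
  assert (Hm1 : forall m, Dm m -> DG (1 * m + 1)).
  { intros m Hm. unfold Dm, DG in *. replace (1 * m + 1 - 1) with (m - 0) by ring. lra. }
  set (F := fun k m => 2 ^ k * DL k (2 * m + 1) + (-2) * (1 ^ k * DL k (1 * m + 1))).
  assert (HF : jet Dm F).
  { apply jet_plus. apply (jet_affine DG); auto. apply smooth_jet; auto.
    apply jet_scal. apply (jet_affine DG); auto. apply smooth_jet; auto. }
  set (h := fun m => L (2 * m + 1) - 2 * L (m + 1)).
  assert (HhF : forall m, Dm m -> h m = F 0%nat m).
  { intros m _. unfold h, F, DL. simpl. replace (1 * m + 1) with (m + 1) by ring. ring. }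
  assert (Hh : smooth Dm h) by (apply (jet_smooth Dm F); auto).
  set (cc := fun j => Derive_n h j 0).
  assert (Hcc : forall j, cc j = (2 ^ j - 2) * DL j 1).
  { intros j. unfold cc. rewrite (jet_Derive_n Dm F h); auto. unfold F.
    replace (2 * 0 + 1) with 1 by ring. replace (1 * 0 + 1) with 1 by ring. rewrite pow1. ring. }
  assert (HG1 : Gamma 1 = 1) by (rewrite Gamma_G by lra; apply G01).
  assert (Hh0 : h 0 = 0).
  { unfold h, L. replace (2 * 0 + 1) with 1 by ring. replace (0 + 1) with 1 by ring.
    rewrite HG1, ln_1. ring. }
  set (Dexp := fun i => Derive_n (fun t => exp (h t)) i 0).
  assert (HBell : forall i, Bell i bell_args = (-1) ^ i * Dexp i).
  { intros i. unfold Dexp. rewrite (exp_taylor Dm h i); auto. fold cc.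
    set (E := fun t => exp (poly cc i t)).
    assert (HE : smooth (fun _ => True) E) by (apply smooth_exp; [apply open_True| apply poly_smooth]).
    assert (HJ := jet_affine (fun _ => True) (fun _ => True) (Derive_n E) (-1) 0 (smooth_jet _ _ HE)
                    (fun _ _ => I)).
    change (Bell i bell_args) with (Derive_n (fun t => exp (poly bell_args i t)) i 0).
    rewrite (Derive_n_ext _ (fun t => E (-1 * t + 0))).
    2:{ intros t. unfold E. f_equal. unfold poly. apply sum_n_m_ext_loc.
        intros j [Hj1 Hj2]. rewrite Hcc. unfold bell_args.
        replace (-1 * t + 0) with (-1 * t) by ring. rewrite Rpow_mult_distr.
        destruct (Nat.leb_spec j 1).
        - replace j with 1%nat by lia. simpl. req. field.
        - unfold etabar, polygamma. replace (S (j - 1)) with j by lia. fold L. fold DL. req. field.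
          apply INR_fact_neq_0. }
    rewrite (jet_Derive_n _ _ _ open_True HJ); auto.
    replace (-1 * 0 + 0) with 0 by ring. reflexivity.
    intros x _. simpl. ring. }
  assert (Hcb : forall m, Dm m -> central_binom m = exp (h m)).
  { intros m Hm. unfold central_binom, h, L.
    assert (Ha : 0 < Gamma (2 * m + 1)) by (apply Hpos; apply Hm2; auto).
    assert (Hb : 0 < Gamma (m + 1)).
    { apply Hpos. pose proof (Hm1 m Hm) as H. rewrite Rmult_1_l in H. exact H. }
    unfold Rminus. rewrite exp_plus, exp_Ropp.
    replace (2 * ln (Gamma (m + 1))) with (ln (Gamma (m + 1)) + ln (Gamma (m + 1))) by ring.
    rewrite exp_plus, !exp_ln by auto. field. lra. }
  split.
  - rewrite (Derive_n_ext_D Dm _ (fun t => exp (h t))); auto.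
    rewrite HBell. rewrite <- Rmult_assoc, neg1_sq. rewrite Rmult_1_l. reflexivity.
  - set (e4 := fun m => exp (- ln 4 * m + 0)).
    assert (HJ4 : jet (fun _ => True) (fun k x => (- ln 4) ^ k * exp (- ln 4 * x + 0))).
    { apply (jet_affine (fun _ => True) (fun _ => True) (fun _ => exp)); auto.
      intros k x _. apply is_derive_exp. }
    assert (He4 : smooth Dm e4).
    { intros k x Hx. apply (jet_smooth (fun _ => True) _ e4 open_True HJ4). intros; simpl; unfold e4; ring.
      auto. }
    assert (He4v : forall k, Derive_n e4 k 0 = (- ln 4) ^ k).
    { intros k. rewrite (jet_Derive_n _ _ e4 open_True HJ4); auto.
      replace (- ln 4 * 0 + 0) with 0 by ring. rewrite exp_0. ring.
      intros; simpl; unfold e4; ring. }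
    rewrite (Derive_n_ext_D Dm _ (fun t => exp (h t) * e4 t)); auto.
    2:{ intros m Hm. rewrite Hcb by auto. unfold e4, Rpower.
        replace (- ln 4 * m + 0) with (- (m * ln 4)) by ring. rewrite exp_Ropp. field.
        apply Rgt_not_eq, exp_pos. }
    rewrite (Derive_n_mult_D Dm); auto. 2: apply smooth_exp; auto.
    unfold leib. change (sum_n_m ?f 0 p) with (sum_n f p). rewrite sum_n_Reals.
    rewrite scal_sum. apply sum_eq. intros i Hi.
    rewrite He4v, HBell, bin_C by auto. fold (Dexp i).
    replace (- ln 4) with (-1 * ln 4) by ring. rewrite Rpow_mult_distr.
    replace ((-1) ^ p) with ((-1) ^ (p - i) * (-1) ^ i) by (rewrite <- pow_add; f_equal; lia).
    transitivity (Binomial.C p i * ln 4 ^ (p - i) * Dexp i * (-1) ^ (p - i) * ((-1) ^ i * (-1) ^ i)).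
    rewrite neg1_sq. ring. ring.
Qed.
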